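(* Let $E$ be a real Hilbert space, $C\subseteq E$ nonempty closed convex, $\rho=\sup_{x,y\in C}\lVert x-y\rVert\in[0,+\infty]$, $a\in C$, and $\widehat{x}_t^*\in E$ arbitrary predictions. For all $z\in C$: (i) If $\eta_1\geqslant\dots\geqslant\eta_{T+1}>0$ and the learner plays $\widetilde{x}_t=P_C\big(a-\eta_t\sum_{i=1}^{t-1}x_i^*\big)$, $x_t=P_C\big(\widetilde{x}_t-\eta_t\widehat{x}_t^*\big)$, then \[\mathrm{Regret}(z,\dots,z)\leqslant\frac1{2\eta_{T+1}}\lVert z-a\rVert^2+\sum_{t=1}^T\frac1{\eta_t}Q_\rho^\star\big(\eta_t\lVert x_t^*-\widehat{x}_t^*\rVert\big)-\sum_{t=1}^T\frac1{2\eta_t}\lVert x_t-\widetilde{x}_t\rVert^2,\] and also $\mathrm{Regret}(z,\dots,z)\leqslant\frac1{2\eta_{T+1}}\lVert z-a\rVert^2+\sum_{t=1}^T\frac1{\eta_t}\Phi_{\eta_t}(x_t^*,\widehat{x}_t^* )-\sum_{t=1}^T\frac1{2\eta_t}\lVert y_t-\widetilde{x}_t\rVert^2$ with $y_t=P_C(\widetilde{x}_t-\eta_t\widehat{y}_t^* )$. (ii) If $0<\theta_1\leqslant\dots\leqslant\theta_T$ and the learner plays $\widetilde{x}_t=P_C\big(a-\sum_{i=1}^{t-1}\theta_ix_i^*\big)$, $x_t=P_C\big(\widetilde{x}_t-\theta_t\widehat{x}_t^*\big)$, then \[\mathrm{Regret}(z,\dots,z)\leqslant\frac1{2\theta_1}\lVert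 z-a\rVert^2+\sum_{t=1}^T\frac1{\theta_t}Q_\rho^\star\big(\theta_t\lVert x_t^*-\widehat{x}_t^*\rVert\big)-\sum_{t=1}^T\frac1{2\theta_t}\lVert x_t-\widetilde{x}_t\rVert^2,\] and also $\mathrm{Regret}(z,\dots,z)\leqslant\frac1{2\theta_1}\lVert z-a\rVert^2+\sum_{t=1}^T\frac1{\theta_t}\Phi_{\theta_t}(x_t^*,\widehat{x}_t^* )-\sum_{t=1}^T\frac1{2\theta_t}\lVert y_t-\widetilde{x}_t\rVert^2$ with $y_t=P_C(\widetilde{x}_t-\theta_t\widehat{y}_t^* )$.
   Context: $P_C$ is the metric projection onto $C$. Protocol: at rounds $t=1,\dots,T$ the learner plays $x_t\in C$, the adversary reveals a proper $\varphi_t\colon E\to(-\infty,+\infty]$ with $C\subseteq\operatorname{dom}\partial\varphi_t$, and $x_t^*\in\partial\varphi_t(x_t)$ ($E$ identified with its dual). $\mathrm{Regret}(z,\dots,z)=\sum_t\varphi_t(x_t)-\sum_t\varphi_t(z)$. $Q_\rho^\star(\varkappa)=\frac12\varkappa^2-\frac12(\lvert\varkappa\rvert-\rho)_+^2$ (with $Q_\infty^\star(\varkappa)=\frac12\varkappa^2$), $x_+=\max\{x,0\}$. $\widehat{y}_t^*=\lambda\widehat{x}_t^*+(1-\lambda)x_t^*$, $\lambda=\min\{\lVert x_t^*\rVert/\lVert x_t^*-\widehat{x}_t^*\rVert,1\}$ (any $\lambda$ if $x_t^*=\widehat{x}_t^*$). For $\xi>0$: $\Phi_\xi(x^*,\widehat{x}^*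 )=Q_\rho^\star\big(\xi\min\{\lVert x^*-\widehat{x}^*\rVert,\lVert x^*\rVert\}\big)+\xi\lVert x^*\rVert\min\{\xi(\lVert x^*-\widehat{x}^*\rVert-\lVert x^*\rVert)_+,\rho\}$. *)

(* Defs.v *)
From HB Require Import structures.
From mathcomp Require Import all_boot all_order all_algebra.
From mathcomp Require Import all_classical all_reals all_analysis.
Set Implicit Arguments. Unset Strict Implicit. Unset Printing Implicit Defensive.
Import Order.TTheory GRing.Theory Num.Theory.
Import numFieldNormedType.Exports.
Local Open Scope classical_set_scope.
Local Open Scope ring_scope.

Section Defs.
Variables (R : realType) (E : completeNormedModType R).

(* A real Hilbert space: a complete normed space whose norm comes from an
   inner product [ip] (symmetric, linear in the first argument, and
   ip x x = |x|^2). *)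
Definition is_inner_product (ip : E -> E -> R) : Prop :=
  (forall x y, ip x y = ip y x) /\
  (forall a x y z, ip (a *: x + y) z = a * ip x z + ip y z) /\
  (forall x, ip x x = `|x| ^+ 2).

Definition is_metric_projection (C : set E) (P : E -> E) : Prop :=
  forall x, C (P x) /\ forall y, C y -> `|x - P x| <= `|x - y|.

Definition diameter (C : set E) : \bar R :=
  ereal_sup [set (`|x - y|)%:E | x in C & y in C].

Definition subgrad (ip : E -> E -> R) (phi : E -> \bar R) (x xs : E) : Prop :=
  phi x \is a fin_num /\
  forall y, (phi x + (ip xs (y - x))%:E <= phi y)%E.

Definition proper_fun (phi : E -> \bar R) : Prop :=
  (forall x, phi x != -oo%E) /\ exists x, phi x != +oo%E.

Definition dom_subdiff (ip : E -> E -> R) (phi : E -> \bar R) : set E :=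
  [set x | exists xs, subgrad ip phi x xs].

Definition regret (T : nat) (phi : nat -> E -> \bar R) (x : nat -> E) (z : E)
  : \bar R :=
  (\sum_(1 <= t < T.+1) phi t (x t) - \sum_(1 <= t < T.+1) phi t z)%E.

Definition lam (xs xh : E) : R := Num.min (`|xs| / `|xs - xh|) 1.
Definition yhat (xs xh : E) : E := lam xs xh *: xh + (1 - lam xs xh) *: xs.

End Defs.

Definition pos_part (R : realType) (x : R) : R := Num.max x 0.

Definition Qstar (R : realType) (rho : \bar R) (k : R) : R :=
  match rho with
  | (r%:E)%E => k ^+ 2 / 2 - (pos_part (`|k| - r)) ^+ 2 / 2
  | _ => k ^+ 2 / 2
  end.

Definition min_rho (R : realType) (rho : \bar R) (v : R) : R :=
  match rho with
  | (r%:E)%E => Num.min v r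
  | _ => v
  end.

Definition Phi (R : realType) (E : completeNormedModType R) (rho : \bar R)
  (xi : R) (xs xh : E) : R :=
  Qstar rho (xi * Num.min `|xs - xh| `|xs|)
  + xi * `|xs| * min_rho rho (xi * pos_part (`|xs - xh| - `|xs|)).

(* Main.v *)
Require Import Defs.
From HB Require Import structures.
From mathcomp Require Import all_boot all_order all_algebra.
From mathcomp Require Import all_classical all_reals all_analysis.
From mathcomp Require Import ring lra zify.
Import Order.TTheory GRing.Theory Num.Theory.
Import numFieldNormedType.Exports.
Local Open Scope classical_set_scope.
Local Open Scope ring_scope.

Section IP.
Variables (R : realType) (E : completeNormedModType R) (ip : E -> E -> R).
Hypothesis Hip : is_inner_product ip.

Lemma ipC x y : ip x y = ip y x.
Proof. by case: Hip. Qed.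
Lemma ipxx x : ip x x = `|x| ^+ 2.
Proof. by case: Hip => _ []. Qed.
Lemma ipL a x y z : ip (a *: x + y) z = a * ip x z + ip y z.
Proof. by case: Hip => _ []. Qed.
Lemma ip0l z : ip 0 z = 0.
Proof.
have := ipL 1 0 0 z; rewrite scaler0 addr0 mul1r => h; lra.
Qed.
Lemma ipZl a x z : ip (a *: x) z = a * ip x z.
Proof. by have := ipL a x 0 z; rewrite addr0 ip0l addr0. Qed.
Lemma ipDl x y z : ip (x + y) z = ip x z + ip y z.
Proof. by have := ipL 1 x y z; rewrite scale1r mul1r. Qed.
Lemma ipNl x z : ip (- x) z = - ip x z.
Proof. by rewrite -scaleN1r ipZl mulN1r. Qed.
Lemma ipBl x y z : ip (x - y) z = ip x z - ip y z.
Proof. by rewrite ipDl ipNl. Qed.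
Lemma ipZr a x z : ip z (a *: x) = a * ip z x.
Proof. by rewrite ipC ipZl ipC. Qed.
Lemma ipDr x y z : ip z (x + y) = ip z x + ip z y.
Proof. by rewrite ipC ipDl !(ipC z). Qed.
Lemma ipNr x z : ip z (- x) = - ip z x.
Proof. by rewrite ipC ipNl ipC. Qed.
Lemma ipBr x y z : ip z (x - y) = ip z x - ip z y.
Proof. by rewrite ipDr ipNr. Qed.
Lemma ip0r z : ip z 0 = 0.
Proof. by rewrite ipC ip0l. Qed.

Lemma sqrnD x y : `|x + y| ^+ 2 = `|x| ^+ 2 + 2 * ip x y + `|y| ^+ 2.
Proof. rewrite -!ipxx ipDl !ipDr (ipC y x); ring. Qed.
Lemma sqrnB x y : `|x - y| ^+ 2 = `|x| ^+ 2 - 2 * ip x y + `|y| ^+ 2.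
Proof. by rewrite sqrnD ipNr normrN; ring. Qed.

Lemma CS x y : ip x y <= `|x| * `|y|.
Proof.
have h := sqrnB (`|y| *: x) (`|x| *: y).
move: (sqr_ge0 `|(`|y| *: x - `|x| *: y)|); rewrite h ipZl ipZr !normrZ !normr_id => h0.
have [->|xn0] := eqVneq x 0; first by rewrite ip0l normr0 mul0r.
have [->|yn0] := eqVneq y 0; first by rewrite ip0r normr0 mulr0.
have hx : 0 < `|x| by rewrite normr_gt0.
have hy : 0 < `|y| by rewrite normr_gt0.
have hxy : 0 < `|x| * `|y| by rewrite mulr_gt0.
nra.
Qed.


Variables (C : set E) (P : E -> E).
Hypothesis hC : convex_set C.
Hypothesis hP : is_metric_projection C P.

Lemma PC w : C (P w).
Proof. by case: (hP w). Qed.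

Lemma P_id w : C w -> P w = w.
Proof.
move=> Cw; have [_ h] := hP w; have := h w Cw; rewrite subrr normr0.
by move=> h0; apply/eqP; rewrite eq_sym -subr_eq0 -normr_le0.
Qed.

Lemma proj_vi w y : C y -> ip (w - P w) (y - P w) <= 0.
Proof.
move=> Cy; set p := P w; set c := ip (w - p) (y - p).
set N := `|y - p| ^+ 2.
have key : forall s, 0 <= s -> s <= 1 -> 2 * s * c <= s ^+ 2 * N.
  move=> s s0 s1.
  have Cq : C (s *: y + (1 - s) *: p).
    have := @hC y p (Itv01 s0 s1) (mem_set Cy) (mem_set (PC w)) : _ \in C.
    by move/set_mem.
  have [_ h] := hP w; have := h _ Cq.
  have -> : w - (s *: y + (1 - s) *: p) = (w - p) - s *: (y - p).
    rewrite scalerBl scale1r scalerBr !opprD !opprK !addrA; congr (_ + _).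
    by rewrite addrAC.
  move=> hn.
  have hn2 : `|w - p| ^+ 2 <= `|w - p - s *: (y - p)| ^+ 2.
    by rewrite lerXn2r // nnegrE normr_ge0.
  move: hn2; rewrite (sqrnB (w - p)) ipZr normrZ ger0_norm // -/c -/N. 
  rewrite exprMn -/N; move=> hh; nra.
rewrite leNgt; apply/negP => cpos.
have N0 : 0 <= N by rewrite /N sqr_ge0.
have [Nz|Npos] := eqVneq N 0.
  by have := key 1 ler01 (lexx 1); rewrite Nz; nra.
have Np : 0 < N by rewrite lt_neqAle eq_sym Npos N0.
set s := Num.min 1 (c / N).
have s0 : 0 < s by rewrite lt_min ltr01 divr_gt0.
have s1 : s <= 1 by rewrite ge_min lexx.
have s2 : s * N <= c.
  have : s <= c / N by rewrite ge_min lexx orbT.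
  by rewrite ler_pdivlMr.
have := key s (ltW s0) s1; nra.
Qed.

Lemma proj_nonexp u v : `|P u - P v| <= `|u - v|.
Proof.
have h1 := @proj_vi u (P v) (PC v).
have h2 := @proj_vi v (P u) (PC u).
have e : 0 <= `|(u - v) - (P u - P v)| ^+ 2 by apply: sqr_ge0.
rewrite sqrnB in e.
have : ip (u - P u) (P v - P u) + ip (v - P v) (P u - P v) =
   - ip (u - v) (P u - P v) + `|P u - P v| ^+ 2.
  rewrite -ipxx !ipBl !ipBr (ipC (P v) (P u)); ring.
move=> hh.
have : `|P u - P v| ^+ 2 <= `|u - v| ^+ 2 by nra.
by rewrite ler_sqr // nnegrE.
Qed.

Lemma Qcore (rho : \bar R) K s : 0 <= K -> 0 <= s -> (s%:E <= rho)%E ->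
  K * s - s ^+ 2 / 2 <= Qstar rho K.
Proof.
move=> K0 s0; case: rho => [r||] /= hr; last first.
- by move: hr; rewrite leeNy_eq.
- have : 0 <= (K - s) ^+ 2 := sqr_ge0 _; nra.
- move: hr; rewrite lee_fin => sr; rewrite ger0_norm // /pos_part.
  have [h|h] := leP (K - r) 0.
    have : 0 <= (K - s) ^+ 2 := sqr_ge0 _; nra.
  nra.
Qed.

Variable rho : \bar R.
Hypothesis hrho : forall u v, C u -> C v -> ((`|u - v|)%:E <= rho)%E.

Lemma step1_scaled eta xt g xs y : 0 < eta -> C y ->
  2 * eta * ip xs (P (xt - eta *: g) - y) - `|y - xt| ^+ 2
  <= 2 * Qstar rho (eta * `|xs - g|) - `|P (xt - eta *: g) - xt| ^+ 2.
Proof.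
move=> eta0 Cy; set x := P (xt - eta *: g).
have vi := @proj_vi (xt - eta *: g) y Cy; rewrite -/x in vi.
have -> : y - xt = (y - x) + (x - xt) by rewrite addrA subrK.
rewrite sqrnD.
have -> : x - y = - (y - x) by rewrite opprB.
rewrite ipNr.
set u := y - x; set e := x - xt.
have E1 : xt - eta *: g - x = - e - eta *: g by rewrite /e opprB addrAC.
move: vi; rewrite E1 ipBl ipNl ipZl -/u => vi.
have cs := CS (g - xs) u; rewrite distrC in cs.
have cs' : eta * ip (g - xs) u <= eta * (`|xs - g| * `|u|) by rewrite ler_wpM2l // ltW.
move: cs'; rewrite ipBl => cs'.
have q := @Qcore rho _ _ (mulr_ge0 (ltW eta0) (normr_ge0 (xs - g))) (normr_ge0 u) (hrho _ _ Cy (PC _)).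
rewrite (ipC u e).
lra.
Qed.

Lemma step1 eta xt g xs y : 0 < eta -> C y ->
  ip xs (P (xt - eta *: g) - y) - (2 * eta)^-1 * `|y - xt| ^+ 2
  <= eta^-1 * Qstar rho (eta * `|xs - g|) - (2 * eta)^-1 * `|P (xt - eta *: g) - xt| ^+ 2.
Proof.
move=> eta0 Cy; have h := @step1_scaled eta xt g xs y eta0 Cy.
have e2 : 0 < 2 * eta by rewrite mulr_gt0.
have ie0 : 0 <= (2 * eta)^-1 by rewrite invr_ge0 ltW.
have := ler_wpM2l ie0 h.
have ne : eta != 0 by rewrite gt_eqF.
set A := ip _ _; set B := `|y - xt| ^+ 2; set Q := Qstar _ _; set D := `|_ - xt| ^+ 2.
have -> : (2 * eta)^-1 * (2 * eta * A - B) = A - (2 * eta)^-1 * B by field.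
have -> : (2 * eta)^-1 * (2 * Q - D) = eta^-1 * Q - (2 * eta)^-1 * D by field.
done.
Qed.

Lemma lam_ge0 (xs xh : E) : 0 <= lam xs xh.
Proof. by rewrite /lam le_min ler01 andbT divr_ge0. Qed.
Lemma lam_le1 (xs xh : E) : lam xs xh <= 1.
Proof. by rewrite /lam ge_min lexx orbT. Qed.
Lemma lam_d (xs xh : E) : lam xs xh * `|xs - xh| = Num.min `|xs - xh| `|xs|.
Proof.
rewrite /lam; have [d0|dn0] := eqVneq `|xs - xh| 0.
  by rewrite d0 invr0 !mulr0 min_l.
by rewrite minr_pMl // divfK // mul1r minC.
Qed.
Lemma yhat_d1 (xs xh : E) : xs - yhat xs xh = lam xs xh *: (xs - xh).
Proof.
by rewrite /yhat scalerBl scale1r scalerBr opprD opprB addrCA [xs + _]addrC subrK addrC.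
Qed.
Lemma yhat_d2 (xs xh : E) : yhat xs xh - xh = (1 - lam xs xh) *: (xs - xh).
Proof.
rewrite /yhat [in RHS]scalerBr addrAC addrC; congr (_ + _).
by rewrite scalerBl scale1r opprB.
Qed.

Lemma lam_d2 (xs xh : E) : (1 - lam xs xh) * `|xs - xh| = pos_part (`|xs - xh| - `|xs|).
Proof.
rewrite mulrBl mul1r lam_d /pos_part.
have [h|h] := leP `|xs - xh| `|xs|.
  by rewrite subrr max_r // subr_le0.
rewrite max_l //; rewrite subr_ge0 ltW //.
Qed.

Lemma step2 eta xt xh xs y : 0 < eta -> C y ->
  ip xs (P (xt - eta *: xh) - y) - (2 * eta)^-1 * `|y - xt| ^+ 2
  <= eta^-1 * Phi rho eta xs xh
     - (2 * eta)^-1 * `|P (xt - eta *: yhat xs xh) - xt| ^+ 2.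
Proof.
move=> eta0 Cy.
have h1 := @step1 eta xt (yhat xs xh) xs y eta0 Cy.
set x := P (xt - eta *: xh); set y' := P (xt - eta *: yhat xs xh).
rewrite -/y' in h1.
have -> : x - y = (x - y') + (y' - y) by rewrite addrA subrK.
rewrite ipDr.
have n1 : `|xs - yhat xs xh| = Num.min `|xs - xh| `|xs|.
  by rewrite yhat_d1 normrZ ger0_norm ?lam_ge0 // lam_d.
rewrite n1 in h1.
have n2 : `|x - y'| <= eta * pos_part (`|xs - xh| - `|xs|).
  apply: le_trans (proj_nonexp _ _) _.
  have -> : xt - eta *: xh - (xt - eta *: yhat xs xh) = eta *: (yhat xs xh - xh).
    by rewrite opprB addrC addrA subrK scalerBr addrC.
  rewrite normrZ yhat_d2 normrZ (ger0_norm (ltW eta0)) ger0_norm ?subr_ge0 ?lam_le1 //.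
  by rewrite lam_d2.
have n3 : `|x - y'| <= min_rho rho (eta * pos_part (`|xs - xh| - `|xs|)).
  have := hrho _ _ (PC (xt - eta *: xh)) (PC (xt - eta *: yhat xs xh)).
  rewrite -/x -/y'.
  case: rho => [r||] //= hr.
  by rewrite le_min n2 -lee_fin hr.
have n4 : ip xs (x - y') <= `|xs| * min_rho rho (eta * pos_part (`|xs - xh| - `|xs|)).
  apply: le_trans (CS _ _) _.
  by rewrite ler_wpM2l.
have -> : eta^-1 * Phi rho eta xs xh = eta^-1 * Qstar rho (eta * Num.min `|xs - xh| `|xs|)
   + `|xs| * min_rho rho (eta * pos_part (`|xs - xh| - `|xs|)).
  rewrite /Phi mulrDr; congr (_ + _).
  by rewrite !mulrA mulVf ?mul1r // gt_eqF.
lra.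
Qed.

Lemma sc_scaled (a : E) eta S y : 0 < eta -> C y ->
  `|P (a - eta *: S) - a| ^+ 2 + 2 * eta * ip S (P (a - eta *: S))
  + `|y - P (a - eta *: S)| ^+ 2 <= `|y - a| ^+ 2 + 2 * eta * ip S y.
Proof.
move=> eta0 Cy; set p := P (a - eta *: S).
have vi := @proj_vi (a - eta *: S) y Cy; rewrite -/p in vi.
have -> : y - a = (y - p) + (p - a) by rewrite addrA subrK.
rewrite (sqrnD (y - p)).
have k := ipBr y p S.
set u := y - p; set e := p - a.
have E1 : a - eta *: S - p = - e - eta *: S by rewrite /e opprB addrAC.
move: vi; rewrite E1 ipBl ipNl ipZl -/u => vi.
rewrite -/u in k; have k2 : eta * ip S u = eta * ip S y - eta * ip S p by rewrite k mulrBr.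
rewrite (ipC u e); lra.
Qed.

Lemma sc (a : E) eta S y : 0 < eta -> C y ->
  (2 * eta)^-1 * `|P (a - eta *: S) - a| ^+ 2 + ip S (P (a - eta *: S))
  + (2 * eta)^-1 * `|y - P (a - eta *: S)| ^+ 2
  <= (2 * eta)^-1 * `|y - a| ^+ 2 + ip S y.
Proof.
move=> eta0 Cy; have h := @sc_scaled a eta S y eta0 Cy.
have e2 : 0 < 2 * eta by rewrite mulr_gt0.
have ie0 : 0 <= (2 * eta)^-1 by rewrite invr_ge0 ltW.
have := ler_wpM2l ie0 h.
have ne : eta != 0 by rewrite gt_eqF.
set A := `|P _ - a| ^+ 2; set B := ip S (P _); set D := `|y - P _| ^+ 2.
set F := `|y - a| ^+ 2; set G := ip S y.
have -> : (2 * eta)^-1 * (A + 2 * eta * B + D) = (2 * eta)^-1 * A + B + (2 * eta)^-1 * D by field.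
have -> : (2 * eta)^-1 * (F + 2 * eta * G) = (2 * eta)^-1 * F + G by field.
done.
Qed.

Lemma tele1 (T : nat) (eta : nat -> R) (xs x : nat -> E) (a z : E) (B : nat -> R) :
  C a -> C z ->
  (forall t, (1 <= t <= T)%N -> eta t.+1 <= eta t) -> 0 < eta T.+1 ->
  (forall t y, (1 <= t <= T)%N -> C y ->
     ip (xs t) (x t - y) - (2 * eta t)^-1
        * `|y - P (a - eta t *: \sum_(1 <= i < t) xs i)| ^+ 2 <= B t) ->
  \sum_(1 <= t < T.+1) ip (xs t) (x t - z)
    <= (2 * eta T.+1)^-1 * `|z - a| ^+ 2 + \sum_(1 <= t < T.+1) B t.
Proof.
move=> Ca Cz hmon hpos hB.
have epos : forall t, (1 <= t <= T.+1)%N -> 0 < eta t.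
  suff : forall k, (k <= T)%N -> 0 < eta (T.+1 - k)%N.
    move=> h t /andP [t1 tT]; have := h (T.+1 - t)%N.
    have -> : (T.+1 - (T.+1 - t) = t)%N by lia.
    by apply; lia.
  elim=> [|k IH] hk; first by rewrite subn0.
  have h1 := IH (ltnW hk).
  have -> : (T.+1 - k.+1 = T - k)%N by lia.
  apply: lt_le_trans h1 _.
  have -> : (T.+1 - k = (T - k).+1)%N by lia.
  by apply: hmon; lia.
set S := fun t => \sum_(1 <= i < t) xs i.
set p := fun t => P (a - eta t *: S t).
set F := fun t y => (2 * eta t)^-1 * `|y - a| ^+ 2 + ip (S t) y.
have claim : forall n, (n <= T)%N ->
  \sum_(1 <= t < n.+1) ip (xs t) (x t - z)
    <= F n.+1 (p n.+1) - ip (S n.+1) z + \sum_(1 <= t < n.+1) B t.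
  elim=> [|n IH] hn.
    rewrite !big_geq // /F /p /S big_geq // scaler0 subr0 (@P_id a Ca) subrr normr0.
    rewrite !ip0l expr0n /=; lra.
  have IH' := IH (ltnW hn).
  rewrite big_nat_recr //= [X in _ <= _ + X]big_nat_recr //=.
  have ht : (1 <= n.+1 <= T)%N by lia.
  have e1 := epos n.+1 (ltnW ht).
  have e2 := epos n.+2 ht.
  have hsc := @sc a (eta n.+1) (S n.+1) (p n.+2) e1 (PC _).
  have hb := hB n.+1 (p n.+2) ht (PC _).
  have hS : S n.+2 = S n.+1 + xs n.+1 by rewrite /S big_nat_recr.
  have hm : (2 * eta n.+1)^-1 * `|p n.+2 - a| ^+ 2 <= (2 * eta n.+2)^-1 * `|p n.+2 - a| ^+ 2.
    apply: ler_wpM2r; first exact: sqr_ge0.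
    rewrite lef_pV2 ?posrE ?mulr_gt0 //.
    by rewrite ler_pM2l //; apply: hmon.
  move: IH' hsc hb hm; rewrite /F /= -/(p n.+1) hS !ipDl.
  rewrite !ipBr; lra.
have := claim T (leqnn T).
have e := epos T.+1 (leqnn _).
have hsc := @sc a (eta T.+1) (S T.+1) z e Cz.
rewrite /F /= -/(p T.+1) in hsc *.
have : 0 <= (2 * eta T.+1)^-1 * `|z - p T.+1| ^+ 2.
  by rewrite mulr_ge0 ?sqr_ge0 // invr_ge0 ltW // mulr_gt0.
lra.
Qed.

Lemma tele2 (T : nat) (theta : nat -> R) (xs x : nat -> E) (a z : E) (B : nat -> R) :
  C a -> C z ->
  0 < theta 1%N -> (forall t, (1 <= t < T)%N -> theta t <= theta t.+1) ->
  (forall t y, (1 <= t <= T)%N -> C y ->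
     ip (xs t) (x t - y) - (2 * theta t)^-1
        * `|y - P (a - \sum_(1 <= i < t) theta i *: xs i)| ^+ 2 <= B t) ->
  \sum_(1 <= t < T.+1) ip (xs t) (x t - z)
    <= (2 * theta 1%N)^-1 * `|z - a| ^+ 2 + \sum_(1 <= t < T.+1) B t.
Proof.
move=> Ca Cz hpos hmon hB.
have tpos : forall t, (1 <= t <= T)%N -> 0 < theta t.
  elim=> [//|t IH] /andP [t1 tT].
  have [->//|t0] := eqVneq t 0%N.
  apply: lt_le_trans (IH _) (hmon _ _); lia.
set S := fun t => \sum_(1 <= i < t) theta i *: xs i.
set p := fun t => P (a - 1 *: S t).
set F := fun t y => (2 * 1)^-1 * `|y - a| ^+ 2 + ip (S t) y.
set N := fun t => F t z - F t (p t).
have Nge0 : forall t, 0 <= N t.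
  move=> t; have := @sc a 1 (S t) z ltr01 Cz.
  rewrite /N /F -/(p t).
  have : 0 <= (2 * 1)^-1 * `|z - p t| ^+ 2 by rewrite mulr_ge0 ?sqr_ge0 // invr_ge0.
  lra.
have hpt : forall t, P (a - \sum_(1 <= i < t) theta i *: xs i) = p t.
  by move=> t; rewrite /p scale1r.
have step : forall t, (1 <= t <= T)%N ->
  ip (xs t) (x t - z) <= (N t - N t.+1) / theta t + B t.
  move=> t ht; have th := tpos t ht.
  have hsc := @sc a 1 (S t) (p t.+1) ltr01 (PC _).
  have hb := hB t (p t.+1) ht (PC _); rewrite hpt in hb.
  have hS : S t.+1 = S t + theta t *: xs t by rewrite /S big_nat_recr //=; lia.
  have hb' := ler_wpM2l (ltW th) hb.
  rewrite -(ler_pM2l th) mulrDr.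
  have tn : theta t != 0 by rewrite gt_eqF.
  have -> : theta t * ((N t - N t.+1) / theta t) = N t - N t.+1 by field.
  move: hb'; rewrite mulrBr.
  have -> : theta t * ((2 * theta t)^-1 * `|p t.+1 - p t| ^+ 2) = (2 * 1)^-1 * `|p t.+1 - p t| ^+ 2 by field.
  move: hsc; rewrite /N /F /= -/(p t) -/(p t.+1) hS !ipDl !ipZl !ipBr.
  rewrite !mulrBr; lra.
case: T hmon hB tpos step => [|m] hmon hB tpos step.
  rewrite !big_geq // addr0 mulr_ge0 ?sqr_ge0 // invr_ge0 ltW // mulr_gt0 //.
have claim : forall n, (n <= m)%N ->
  \sum_(1 <= t < n.+2) ip (xs t) (x t - z)
    <= N 1%N / theta 1%N - N n.+2 / theta n.+1 + \sum_(1 <= t < n.+2) B t.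
  elim=> [|n IH] hn.
    rewrite !big_nat1; have := step 1%N (ltac:(lia)); rewrite mulrBl; lra.
  have IH' := IH (ltnW hn).
  rewrite big_nat_recr //= [X in _ <= _ + X]big_nat_recr //=.
  have := step n.+2 (ltac:(lia)).
  have t1 := tpos n.+1 (ltac:(lia)); have t2 := tpos n.+2 (ltac:(lia)).
  have hm : N n.+2 / theta n.+2 <= N n.+2 / theta n.+1.
    apply: ler_wpM2l; first exact: Nge0.
    rewrite lef_pV2 ?posrE //; apply: hmon; lia.
  move: IH'; rewrite mulrBl; lra.
have cl := claim m (leqnn m).
have hN1 : N 1%N / theta 1%N = (2 * theta 1%N)^-1 * `|z - a| ^+ 2.
  rewrite /N /F /p /S big_geq // scaler0 subr0 (@P_id a Ca) subrr normr0 !ip0l.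
  rewrite expr0n /= mulr0 !addr0 subr0.
  have tn : theta 1%N != 0 by rewrite gt_eqF.
  by field.
have hnn : 0 <= N m.+2 / theta m.+1.
  by rewrite divr_ge0 ?Nge0 // ltW // tpos //; lia.
lra.
Qed.

Lemma regret_le T (phi : nat -> E -> \bar R) (x xs : nat -> E) z :
  C z -> (forall t, (1 <= t <= T)%N ->
     C `<=` dom_subdiff ip (phi t) /\ subgrad ip (phi t) (x t) (xs t)) ->
  (regret T phi x z <= (\sum_(1 <= t < T.+1) ip (xs t) (x t - z))%:E)%E.
Proof.
move=> Cz h.
have fz : forall t, (1 <= t < T.+1)%N -> phi t z \is a fin_num.
  by move=> t ht; have [hd _] := h t ht; have [xs' [f _]] := hd z Cz.
have fx : forall t, (1 <= t < T.+1)%N -> phi t (x t) \is a fin_num.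
  by move=> t ht; have [_ [f _]] := h t ht.
rewrite /regret.
rewrite (@eq_big_nat _ _ _ 1 T.+1 (fun t => phi t (x t)) (fun t => (fine (phi t (x t)))%:E)); last first.
  by move=> t ht; rewrite fineK // fx.
rewrite (@eq_big_nat _ _ _ 1 T.+1 (fun t => phi t z) (fun t => (fine (phi t z))%:E)); last first.
  by move=> t ht; rewrite fineK // fz.
rewrite !sumEFin -EFinB lee_fin -sumrB.
apply: ler_sum_nat => t ht.
have [_ [_ hs]] := h t ht.
have := hs z; rewrite -(fineK (fx t ht)) -(fineK (fz t ht)) -EFinD lee_fin.
rewrite (ipBr z (x t)) (ipBr (x t) z); lra.
Qed.
End IP.

Lemma diam_ub (R : realType) (E : completeNormedModType R) (C : set E) u v :
  C u -> C v -> ((`|u - v|)%:E <= diameter C)%E.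
Proof.
move=> Cu Cv; rewrite /diameter; apply: ereal_sup_ubound.
by exists u => //; exists v.
Qed.

Lemma dec_pos (R : realType) (T : nat) (eta : nat -> R) :
  (forall t, (1 <= t <= T)%N -> eta t.+1 <= eta t) -> 0 < eta T.+1 ->
  forall t, (1 <= t <= T.+1)%N -> 0 < eta t.
Proof.
move=> hmon hpos.
  suff : forall k, (k <= T)%N -> 0 < eta (T.+1 - k)%N.
    move=> h t /andP [t1 tT]; have := h (T.+1 - t)%N.
    have -> : (T.+1 - (T.+1 - t) = t)%N by lia.
    by apply; lia.
  elim=> [|k IH] hk; first by rewrite subn0.
  have h1 := IH (ltnW hk).
  have -> : (T.+1 - k.+1 = T - k)%N by lia.
  apply: lt_le_trans h1 _.
  have -> : (T.+1 - k = (T - k).+1)%N by lia.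
  by apply: hmon; lia.
Qed.

Lemma inc_pos (R : realType) (T : nat) (theta : nat -> R) :
  0 < theta 1%N -> (forall t, (1 <= t < T)%N -> theta t <= theta t.+1) ->
  forall t, (1 <= t <= T)%N -> 0 < theta t.
Proof.
move=> hpos hmon.
  elim=> [//|t IH] /andP [t1 tT].
  have [->//|t0] := eqVneq t 0%N.
  apply: lt_le_trans (IH _) (hmon _ _); lia.
Qed.

Theorem corollary6 (R : realType) (E : completeNormedModType R)
  (ip : E -> E -> R) (C : set E) (P : E -> E) (a : E) (T : nat) :
  is_inner_product ip ->
  C !=set0 -> closed C -> convex_set C ->
  is_metric_projection C P ->
  C a ->
  let rho := diameter C in
  (forall (eta : nat -> R) (phi : nat -> E -> \bar R) (xs xh x xt : nat -> E)
          (z : E),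
     (forall t, (1 <= t <= T)%N -> eta t.+1 <= eta t) -> 0 < eta T.+1 ->
     (forall t, (1 <= t <= T)%N ->
        [/\ proper_fun (phi t), C `<=` dom_subdiff ip (phi t),
            xt t = P (a - eta t *: \sum_(1 <= i < t) xs i),
            x t = P (xt t - eta t *: xh t)
          & subgrad ip (phi t) (x t) (xs t)]) ->
     C z ->
     (regret T phi x z <=
        ((2 * eta T.+1)^-1 * `|z - a| ^+ 2
         + \sum_(1 <= t < T.+1) (eta t)^-1 * Qstar rho (eta t * `|xs t - xh t|)
         - \sum_(1 <= t < T.+1) (2 * eta t)^-1 * `|x t - xt t| ^+ 2)%:E)%E
     /\
     (regret T phi x z <=
        ((2 * eta T.+1)^-1 * `|z - a| ^+ 2
         + \sum_(1 <= t < T.+1) (eta t)^-1 * Phi rho (eta t) (xs t) (xh t)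
         - \sum_(1 <= t < T.+1) (2 * eta t)^-1
             * `|P (xt t - eta t *: yhat (xs t) (xh t)) - xt t| ^+ 2)%:E)%E)
  /\
  (forall (theta : nat -> R) (phi : nat -> E -> \bar R) (xs xh x xt : nat -> E)
          (z : E),
     0 < theta 1%N -> (forall t, (1 <= t < T)%N -> theta t <= theta t.+1) ->
     (forall t, (1 <= t <= T)%N ->
        [/\ proper_fun (phi t), C `<=` dom_subdiff ip (phi t),
            xt t = P (a - \sum_(1 <= i < t) theta i *: xs i),
            x t = P (xt t - theta t *: xh t)
          & subgrad ip (phi t) (x t) (xs t)]) ->
     C z ->
     (regret T phi x z <=
        ((2 * theta 1%N)^-1 * `|z - a| ^+ 2
         + \sum_(1 <= t < T.+1) (theta t)^-1 * Qstar rho (theta t * `|xs t - xh t|)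
         - \sum_(1 <= t < T.+1) (2 * theta t)^-1 * `|x t - xt t| ^+ 2)%:E)%E
     /\
     (regret T phi x z <=
        ((2 * theta 1%N)^-1 * `|z - a| ^+ 2
         + \sum_(1 <= t < T.+1) (theta t)^-1 * Phi rho (theta t) (xs t) (xh t)
         - \sum_(1 <= t < T.+1) (2 * theta t)^-1
             * `|P (xt t - theta t *: yhat (xs t) (xh t)) - xt t| ^+ 2)%:E)%E).
Proof.
move=> Hip _ _ hC hP Ca rho.
have hrho : forall u v, C u -> C v -> ((`|u - v|)%:E <= rho)%E.
  by move=> u v; apply: diam_ub.
split.
- move=> eta phi xs xh x xt z hmon hpos hyp Cz.
  have epos := @dec_pos R T eta hmon hpos.
  have hreg : (regret T phi x z <= (\sum_(1 <= t < T.+1) ip (xs t) (x t - z))%:E)%E.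
    apply: (@regret_le R E ip Hip C) => // t ht.
    by have [_ h1 _ _ h2] := hyp t ht.
  split; apply: le_trans hreg _; rewrite lee_fin -addrA -sumrB.
  + apply: (@tele1 R E ip Hip C P hC hP) => // t y ht Cy.
    have [_ _ ext ex _] := hyp t ht; rewrite -ext ex.
    apply: (@step1 R E ip Hip C P hC hP rho hrho) => //; apply: epos; lia.
  + apply: (@tele1 R E ip Hip C P hC hP) => // t y ht Cy.
    have [_ _ ext ex _] := hyp t ht; rewrite -ext ex.
    apply: (@step2 R E ip Hip C P hC hP rho hrho) => //; apply: epos; lia.
- move=> theta phi xs xh x xt z hpos hmon hyp Cz.
  have tpos := @inc_pos R T theta hpos hmon.
  have hreg : (regret T phi x z <= (\sum_(1 <= t < T.+1) ip (xs t) (x t - z))%:E)%E.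
    apply: (@regret_le R E ip Hip C) => // t ht.
    by have [_ h1 _ _ h2] := hyp t ht.
  split; apply: le_trans hreg _; rewrite lee_fin -addrA -sumrB.
  + apply: (@tele2 R E ip Hip C P hC hP) => // t y ht Cy.
    have [_ _ ext ex _] := hyp t ht; rewrite -ext ex.
    by apply: (@step1 R E ip Hip C P hC hP rho hrho) => //; apply: tpos.
  + apply: (@tele2 R E ip Hip C P hC hP) => // t y ht Cy.
    have [_ _ ext ex _] := hyp t ht; rewrite -ext ex.
    by apply: (@step2 R E ip Hip C P hC hP rho hrho) => //; apply: tpos.
Qed.
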